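(* Let $(X,\Sigma)$ be a measurable space and $p$ a transition function on it with associated operator $A$ on $ba(X,\Sigma)$. Suppose $A$ has a finitely additive cycle of measures $K=\{\mu_1,\dots,\mu_m\}\subset S_{ba}$ (of any period $m$) whose mean measure $\mu=\frac1m\sum_{i=1}^m\mu_i$ is the only invariant finitely additive probability measure of $A$, i.e. $\Delta_{ba}=\{\mu\}$. Then the cycle $K$ (all $\mu_i$) and its mean measure $\mu$ are countably additive.
   Context: $X$ is an arbitrary infinite set and $\Sigma$ a $\sigma$-algebra of subsets of $X$ containing all one-point sets. $ba(X,\Sigma)$ denotes the space of bounded finitely additive real-valued measures on $\Sigma$, $S_{ba}=\{\mu\in ba(X,\Sigma):\mu\ge0,\ \mu(X)=1\}$, and $\Delta_{ba}=\{\mu\in S_{ba}:A\mu=\mu\}$. A transition function is a map $p(x,E)$ with $0\le p(x,E)\le1$, $p(x,X)=1$, $p(\cdot,E)$ bounded $\Sigma$-measurable for every $E\in\Sigma$, and $p(x,\cdot)$ countably additive for every $x\in X$. The Markov operator is $A\mu(E)=\int_X p(x,E)\,\mu(dx)$. A cycle of measures of $A$ is a finite numbered set $\{\mu_1,\dots,\mu_m\}$ of pairwise different positive finitely additive measures with $A\mu_i=\mu_{i+1}$ ($1\le i\le m-1$), $A\mu_m=\mu_1$. *)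

(* Defs.v *)
From HB Require Import structures.
From mathcomp Require Import all_boot all_order all_algebra.
From mathcomp Require Import all_classical all_reals all_analysis.
Set Implicit Arguments. Unset Strict Implicit. Unset Printing Implicit Defensive.
Import Order.TTheory GRing.Theory Num.Theory.
Import numFieldNormedType.Exports.
Local Open Scope classical_set_scope.
Local Open Scope ring_scope.

(* Finitely additive (set) functions on the sigma-algebra [measurable] of X.
   A finitely additive measure is represented by a function mu : set X -> R;
   only its values on measurable sets matter. *)
Section FADefs.
Context {d : measure_display} {X : measurableType d} {R : realType}.

(* mu belongs to S_ba: positive, finitely additive, mu(X) = 1
   (boundedness follows: 0 <= mu E <= 1). *)
Definition fa_prob (mu : set X -> R) : Prop :=
  [/\ forall E, measurable E -> 0 <= mu E,
      mu setT = 1 &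
      forall E F, measurable E -> measurable F -> E `&` F = set0 ->
        mu (E `|` F) = mu E + mu F].

Definition meq (mu nu : set X -> R) : Prop :=
  forall E, measurable E -> mu E = nu E.

Definition countably_additive (mu : set X -> R) : Prop :=
  forall F : nat -> set X, (forall n, measurable (F n)) -> trivIset setT F ->
    (fun n => \sum_(i < n) mu (F i)) @ \oo --> mu (\bigcup_n F n).

Definition transition_function (p : X -> set X -> R) : Prop :=
  [/\ forall x E, measurable E -> 0 <= p x E <= 1,
      forall x, p x setT = 1,
      forall E, measurable E -> measurable_fun setT (fun x => p x E) &
      forall x, countably_additive (p x)].

Definition lower_simple_sums (mu : set X -> R) (f : X -> R) : set R :=
  [set r | exists n (a : 'I_n -> R) (E : 'I_n -> set X),
     [/\ forall i, measurable (E i),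
         forall i j, i != j -> E i `&` E j = set0,
         forall x, \sum_(i < n) a i * \1_(E i) x <= f x &
         r = \sum_(i < n) a i * mu (E i)]].

(* integral of a bounded measurable function w.r.t. a positive finitely
   additive measure (Dunford-Schwartz integral) *)
Definition fa_integral (mu : set X -> R) (f : X -> R) : R :=
  sup (lower_simple_sums mu f).

Definition markov_op (p : X -> set X -> R) (mu : set X -> R) : set X -> R :=
  fun E => fa_integral mu (fun x => p x E).

Definition mean_measure (m : nat) (mu : nat -> set X -> R) : set X -> R :=
  fun E => m%:R^-1 * \sum_(i < m) mu i E.

End FADefs.

(* Main.v *)
Require Import Defs.
From HB Require Import structures.
From mathcomp Require Import all_boot all_order all_algebra.
From mathcomp Require Import all_classical all_reals all_analysis.
From mathcomp Require Import ring lra.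
Import Order.TTheory GRing.Theory Num.Theory.
Import numFieldNormedType.Exports.
Local Open Scope classical_set_scope.
Local Open Scope ring_scope.

Section Aux.
Context {R : realType}.

Lemma cvg_epsP (u : nat -> R) (l : R) : u @ \oo --> l <->
  forall e, 0 < e -> exists M, forall n, (M <= n)%N -> `|u n - l| < e.
Proof.
rewrite cvgrPdist_lt; split.
  move=> H e e0; have [M _ HM] := H e e0; exists M => n Mn.
  by rewrite distrC; exact: HM.
move=> H e e0; have [M HM] := H e e0; exists M => // n Mn.
by rewrite distrC; exact: HM.
Qed.

Lemma eq_of_small (x : R) : (forall e, 0 < e -> `|x| < e) -> x = 0.
Proof.
move=> H; apply/eqP; rewrite -normr_eq0; apply/negPn/negP => nx0.
have := H `|x|; rewrite lt0r nx0 normr_ge0 => /(_ isT); by rewrite ltxx.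
Qed.

Lemma eq_of_smallN (x y M : R) : (forall N : nat, (0 < N)%N -> `|x - y| <= M / N%:R) -> x = y.
Proof.
move=> H; apply/eqP; rewrite -subr_eq0; apply/eqP/eq_of_small => e e0.
have M0 : 0 <= M by have := H 1%N isT; rewrite divr1; apply: le_trans.
pose N := (Num.truncn (M / e)).+1.
apply: (le_lt_trans (H N isT)).
rewrite ltr_pdivrMr ?ltr0n // mulrC -ltr_pdivrMr //.
exact: Num.Theory.truncnS_gt.
Qed.

End Aux.
Section FA.
Context {d : measure_display} {X : measurableType d} {R : realType}.

Definition famS (rho : set X -> R) : Prop :=
  (forall E, measurable E -> 0 <= rho E) /\
  (forall E F, measurable E -> measurable F -> E `&` F = set0 ->
     rho (E `|` F) = rho E + rho F).

Lemma famS_prob rho : fa_prob rho -> famS rho.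
Proof. by case=> h1 _ h3; split. Qed.

Variable rho : set X -> R.
Hypothesis hrho : famS rho.

Lemma fam0 : rho set0 = 0.
Proof.
have := hrho.2 set0 set0 measurable0 measurable0 (setI0 _).
rewrite setU0 => h; lra.
Qed.

Lemma famge0 E : measurable E -> 0 <= rho E.
Proof. exact: hrho.1. Qed.

Lemma famD E F : measurable E -> measurable F -> E `<=` F ->
  rho (F `\` E) = rho F - rho E.
Proof.
move=> mE mF EF.
have mG : measurable (F `\` E) by apply: measurableD.
have : rho (E `|` (F `\` E)) = rho E + rho (F `\` E).
  apply: hrho.2 => //; by rewrite setDE setICA setICr setI0.
rewrite setDUK // => ->; lra.
Qed.

Lemma famle E F : measurable E -> measurable F -> E `<=` F -> rho E <= rho F.
Proof.
move=> mE mF EF; have := @famge0 _ (measurableD mF mE); rewrite famD //.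
by rewrite subr_ge0.
Qed.

Lemma fam_sum (I : eqType) (F : I -> set X) (s : seq I) E :
  uniq s -> measurable E -> (forall i, measurable (F i)) ->
  (forall i j, i != j -> F i `&` F j = set0) ->
  measurable [set x | exists2 i, i \in s & F i x] /\
  rho (E `&` [set x | exists2 i, i \in s & F i x]) = \sum_(i <- s) rho (E `&` F i).
Proof.
move=> + mE mF dF; elim: s => [|a s IH] /=.
  have -> : [set x | exists2 i, i \in [::] & F i x] = set0.
    by apply/seteqP; split=> x //= [i].
  by rewrite setI0 fam0 big_nil; split.
case/andP => nas /IH [mU eU].
have -> : [set x | exists2 i, i \in a :: s & F i x] =
    F a `|` [set x | exists2 i, i \in s & F i x].
  apply/seteqP; split=> x /=.
    by case=> i; rewrite inE => /orP [/eqP ->|iS Fi]; [left|right; exists i].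
  by case=> [Fa|[i iS Fi]]; [exists a; rewrite ?inE ?eqxx|exists i; rewrite ?inE ?iS ?orbT].
split; first exact: measurableU.
rewrite setIUr hrho.2; first by rewrite big_cons eU.
- exact: measurableI.
- exact: measurableI.
apply/seteqP; split=> x //= [[_ Fa] [_ [i iS Fi]]].
have ia : i != a by apply/eqP => ia; move: nas; rewrite -ia iS.
by have := dF _ _ ia; move/seteqP => [+ _] => /(_ x) /=; apply.
Qed.

Lemma fam_sum_fin (I : finType) (F : I -> set X) E :
  measurable E -> (forall i, measurable (F i)) ->
  (forall i j, i != j -> F i `&` F j = set0) ->
  \sum_(i : I) rho (E `&` F i) = rho (E `&` [set x | exists i, F i x]).
Proof.
move=> mE mF dF.
have [_ <-] := @fam_sum I F _ E (index_enum_uniq I) mE mF dF.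
congr (rho (E `&` _)); apply/seteqP; split=> x /= [i]; first by move=> _; exists i.
by move=> Fi; exists i; rewrite ?mem_index_enum.
Qed.

Lemma fam_sum_lab (T : finType) (lab : X -> T) E :
  measurable E -> (forall t, measurable [set x | lab x = t]) ->
  \sum_(t : T) rho (E `&` [set x | lab x = t]) = rho E.
Proof.
move=> mE mF; rewrite fam_sum_fin //.
  congr (rho _); apply/seteqP; split=> x /=; first by case.
  by move=> Ex; split => //; exists (lab x).
move=> i j ij; apply/seteqP; split=> x //= [-> ji].
by move: ij; rewrite ji eqxx.
Qed.

Lemma reindex_ev (T : finType) (G : T -> R) :
  \sum_(i < #|T|) G (enum_val i) = \sum_(t : T) G t.
Proof. by rewrite -big_enum_val. Qed.

Lemma indic_sum_at n (a : 'I_n -> R) (E : 'I_n -> set X) i x :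
  (forall i j, i != j -> E i `&` E j = set0) -> E i x ->
  \sum_(j < n) a j * \1_(E j) x = a i.
Proof.
move=> dE Eix; rewrite (bigD1 i) //= big1 ?addr0.
  by rewrite indicE mem_set // mulr1.
move=> j ji; rewrite indicE memNset ?mulr0 // => Ejx.
have := dE _ _ ji; move/seteqP => [+ _] => /(_ x) /=; apply; by split.
Qed.

Lemma mseq (I : eqType) (F : I -> set X) (s : seq I) :
  (forall i, measurable (F i)) -> measurable [set x | exists2 i, i \in s & F i x].
Proof.
move=> mF; elim: s => [|a s IH].
  have -> : [set x | exists2 i, i \in [::] & F i x] = set0.
    by apply/seteqP; split=> x //= [i].
  exact: measurable0.
have -> : [set x | exists2 i, i \in a :: s & F i x] =
    F a `|` [set x | exists2 i, i \in s & F i x].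
  apply/seteqP; split=> x /=.
    by case=> i; rewrite inE => /orP [/eqP ->|iS Fi]; [left|right; exists i].
  by case=> [Fa|[i iS Fi]]; [exists a; rewrite ?inE ?eqxx|exists i; rewrite ?inE ?iS ?orbT].
exact: measurableU.
Qed.

Lemma mfin (I : finType) (F : I -> set X) :
  (forall i, measurable (F i)) -> measurable [set x | exists i, F i x].
Proof.
move=> mF; have := @mseq I F (index_enum I) mF.
congr measurable; apply/seteqP; split=> x /= [i]; first by move=> _; exists i.
by move=> Fi; exists i; rewrite ?mem_index_enum.
Qed.

Lemma UB (T : finType) (lab : X -> T) (c : T -> R) (f : X -> R) :
  (forall t, measurable [set x | lab x = t]) -> (forall t, 0 <= c t) ->
  (forall x, f x <= c (lab x)) ->
  forall r, lower_simple_sums rho f r ->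
  r <= \sum_(t : T) c t * rho [set x | lab x = t].
Proof.
move=> mF c0 fc r [n [a [E [mE dE le ->]]]].
apply: (@le_trans _ _ (\sum_(i < n) \sum_(t : T) c t * rho ([set x | lab x = t] `&` E i))).
  apply: ler_sum => i _.
  rewrite -(@fam_sum_lab T lab (E i) (mE i) mF) mulr_sumr; apply: ler_sum => t _.
  rewrite setIC.
  have [[x [Fx Ex]]|nx] := pselect (exists x, lab x = t /\ E i x).
    apply: ler_wpM2r; first by apply: famge0; apply: measurableI.
    have := le x; rewrite (@indic_sum_at n a E i x dE Ex) => /le_trans; apply.
    by rewrite -Fx.
  have -> : [set x | lab x = t] `&` E i = set0.
    by apply/seteqP; split=> x //= [h1 h2]; apply: nx; exists x.
  by rewrite fam0 !mulr0.
rewrite exchange_big /=; apply: ler_sum => t _.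
rewrite -mulr_sumr; apply: ler_wpM2l => //.
rewrite (@fam_sum_fin _ E) //; apply: famle => //.
- apply: measurableI => //.
  exact: mfin.

Qed.

Lemma lss0 f : (forall x, 0 <= f x) -> lower_simple_sums rho f 0.
Proof.
move=> f0; exists 0%N, (fun _ => 0), (fun _ => set0); split.
- by move=> i; exact: measurable0.
- by move=> [].
- by move=> x; rewrite big_ord0.
- by rewrite big_ord0.
Qed.

Lemma int_le (T : finType) (lab : X -> T) (c : T -> R) (f : X -> R) :
  (forall t, measurable [set x | lab x = t]) -> (forall t, 0 <= c t) ->
  (forall x, 0 <= f x) -> (forall x, f x <= c (lab x)) ->
  fa_integral rho f <= \sum_(t : T) c t * rho [set x | lab x = t].
Proof.
move=> mF c0 f0 fc; apply: ge_sup; first by exists 0; exact: lss0.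
by move=> r; apply: UB.
Qed.

Lemma lss_ub (f : X -> R) (M : R) : 0 <= M -> (forall x, f x <= M) ->
  has_ubound (lower_simple_sums rho f).
Proof.
move=> M0 fM; exists (M * rho setT) => r /(@UB unit (fun _ => tt) (fun _ => M) f).
have mF : forall t : unit, measurable [set x : X | tt = t].
  by case; have -> : [set x : X | tt = tt] = setT by apply/seteqP; split.
move=> /(_ mF (fun _ => M0) fM); rewrite (bigD1 tt) //= big_pred0 ?addr0; last by case.
by have -> : [set x : X | tt = tt] = setT by apply/seteqP; split.
Qed.

Lemma int_ge (T : finType) (lab : X -> T) (c : T -> R) (f : X -> R) (M : R) :
  (forall t, measurable [set x | lab x = t]) -> 0 <= M -> (forall x, f x <= M) ->
  (forall x, c (lab x) <= f x) ->
  \sum_(t : T) c t * rho [set x | lab x = t] <= fa_integral rho f.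
Proof.
move=> mF M0 fM cf; apply: (ub_le_sup (@lss_ub f M M0 fM)).
exists #|T|, (fun i => c (enum_val i)), (fun i => [set x | lab x = enum_val i]); split.
- by move=> i; exact: mF.
- move=> i j ij; apply/seteqP; split=> x //= [-> h].
  by move: ij; rewrite (enum_val_inj h) eqxx.
- move=> x; rewrite (@reindex_ev T (fun t => c t * \1_[set x | lab x = t] x)).
  rewrite (bigD1 (lab x)) //= big1 ?addr0.
    by rewrite indicE mem_set // mulr1.
  by move=> t tx; rewrite indicE memNset ?mulr0 //= => h; move: tx; rewrite h eqxx.
- by rewrite (@reindex_ev T (fun t => c t * rho [set x | lab x = t])).
Qed.

Lemma SW (T : finType) (lab : X -> T) (c : T -> R) (f : X -> R) (h M : R) :
  (forall t, measurable [set x | lab x = t]) -> (forall t, 0 <= c t) -> 0 <= h ->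
  0 <= M -> (forall x, 0 <= f x <= M) ->
  (forall x, c (lab x) <= f x <= c (lab x) + h) ->
  \sum_(t : T) c t * rho [set x | lab x = t] <= fa_integral rho f <=
  \sum_(t : T) c t * rho [set x | lab x = t] + h * rho setT.
Proof.
move=> mF c0 h0 M0 fM cf; apply/andP; split.
  apply: (@int_ge T lab c f M) => // x; [by case/andP: (fM x)|by case/andP: (cf x)].
apply: le_trans (@int_le T lab (fun t => c t + h) f mF _ _ _) _.
- by move=> t; apply: addr_ge0.
- by move=> x; case/andP: (fM x).
- by move=> x; case/andP: (cf x).
under eq_bigr do rewrite mulrDl.
rewrite big_split /= -mulr_sumr.
rewrite -(@fam_sum_lab T lab setT measurableT mF).
rewrite le_eqVlt; apply/orP; left; apply/eqP; congr (_ + _ * _); apply: eq_bigr => t _; by rewrite setTI.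
Qed.

End FA.

Section Lvl.
Context {d : measure_display} {X : measurableType d} {R : realType}.

Definition lvl (N : nat) (f : X -> R) (x : X) : 'I_N.+1 :=
  inord (Num.truncn (N%:R * f x)).

Lemma lvl_val N f x : 0 <= f x <= 1 -> (lvl N f x : nat) = Num.truncn (N%:R * f x).
Proof.
move=> /andP [f0 f1]; rewrite /lvl inordK // Num.Theory.truncn_lt_nat ?mulr_ge0 //.
by apply: (le_lt_trans (y := N%:R)); [rewrite ler_piMr|rewrite ltr_nat].
Qed.

Lemma lvl_bounds N f x : (0 < N)%N -> 0 <= f x <= 1 ->
  (lvl N f x)%:R / N%:R <= f x <= (lvl N f x)%:R / N%:R + N%:R^-1.
Proof.
move=> N0 fx; rewrite lvl_val //; case/andP: fx => f0 f1.
have := Num.Theory.truncn_itv (mulr_ge0 (ler0n _ N) f0) => /andP [h1 h2].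
have N0' : 0 < (N%:R : R) by rewrite ltr0n.
apply/andP; split.
  by rewrite ler_pdivrMr // (mulrC (f x)).
rewrite -[X in _ <= _ + X]mul1r -mulrDl ler_pdivlMr // (mulrC (f x)).
by apply: ltW; rewrite natr1.
Qed.

Lemma lvl_meas N (f : X -> R) : measurable_fun setT f -> (forall x, 0 <= f x <= 1) ->
  forall t, measurable [set x | lvl N f x = t].
Proof.
move=> mf f01 t.
have mg : measurable_fun setT (fun x => N%:R * f x).
  by apply: measurable_realfun.measurable_funM => //; exact: measurable_cst.
have := mg measurableT _ (measurable_itv `[(t : nat)%:R, (t.+1)%:R[).
congr measurable; apply/seteqP; split=> x /=.
  move=> [_]; rewrite in_itv /= => h; apply: val_inj => /=; rewrite lvl_val //.
  apply/eqP; rewrite Num.Theory.truncn_eq //.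
  by apply: mulr_ge0 => //; case/andP: (f01 x).
move=> h; split => //; rewrite in_itv /= -h lvl_val //.
by apply: Num.Theory.truncn_itv; apply: mulr_ge0 => //; case/andP: (f01 x).
Qed.

End Lvl.

Section CA.
Context {d : measure_display} {X : measurableType d} {R : realType}.

Definition cont0 (rho : set X -> R) : Prop :=
  forall E : nat -> set X, (forall j, measurable (E j)) ->
    (forall j, E j.+1 `<=` E j) -> (forall x, exists j, ~ E j x) ->
    forall e, 0 < e -> exists M, forall j, (M <= j)%N -> rho (E j) < e.

Lemma sum_nat_ord (G : nat -> R) n : \sum_(i < n) G i = \sum_(0 <= i < n) G i.
Proof. by rewrite big_mkord. Qed.

Lemma ca_famS (rho : set X -> R) : (forall E, measurable E -> 0 <= rho E) ->
  countably_additive rho -> famS rho.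
Proof.
move=> r0 ca.
have e0 : rho set0 = 0.
  have := ca (fun _ => set0) (fun _ => measurable0).
  have tv : trivIset setT (fun _ : nat => @set0 X) by move=> i j _ _ [x []].
  move=> /(_ tv); rewrite bigcup0 // => /cvg_epsP.
  have c0 := r0 _ measurable0; set c := rho set0 in c0 *.
  case: (ltrgt0P c) => [cpos||//]; last by move=> cneg; move: c0; rewrite leNgt cneg.
  move=> /(_ (c / 2)); rewrite divr_gt0 // => /(_ isT) [M HM].
  have h1 := HM M (leqnn _); have h2 := HM M.+1 (leqnSn _).
  move: h1 h2; rewrite !sumr_const !card_ord mulrS.
  set y := c *+ M; rewrite !ltr_norml => /andP [h1 h2] /andP [h3 h4]; lra.
split => // E F mE mF EF.
pose G := fun n : nat => if n == 0%N then E else if n == 1%N then F else set0.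
have mG : forall n, measurable (G n).
  by move=> [|[|n]] //=; exact: measurable0.
have tG : trivIset setT G.
  move=> i j _ _ [x [Gi Gj]]; move: Gi Gj; rewrite /G.
  have EFx : ~ (E x /\ F x) by move=> h; have : (E `&` F) x by []; rewrite EF.
  case: i => [|[|i]] /=; case: j => [|[|j]] //= h1 h2; exfalso; tauto.
have H := ca G mG tG; rewrite cvg_epsP in H.
have eU : \bigcup_n G n = E `|` F.
  apply/seteqP; split => x /=.
    by case=> [[|[|n]]] //= _ h; [left|right].
  by case=> h; [exists 0%N|exists 1%N].
rewrite eU in H.
apply/eqP; rewrite -subr_eq0; apply/eqP/eq_of_small => e e0'.
have [M HM] := H e e0'.
have := HM (M.+2) (leq_trans (leqnSn _) (leqnSn _)).
rewrite (sum_nat_ord (fun i => rho (G i))) !big_nat_recl // big1; last by move=> i _; exact: e0.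
rewrite /G /= !ltr_norml => /andP[h1 h2]; apply/andP; split; lra.
Qed.


Lemma mono_sub (E : nat -> set X) : (forall j, E j.+1 `<=` E j) ->
  forall i j, (i <= j)%N -> E j `<=` E i.
Proof.
move=> dec i j /subnKC <-; elim: (j - i)%N => [|k IH]; first by rewrite addn0.
by rewrite addnS; apply: subset_trans (dec _) IH.
Qed.

Lemma ca_cont0 (rho : set X -> R) : famS rho -> countably_additive rho -> cont0 rho.
Proof.
move=> hr ca E mE dec emp e e0.
pose F := fun n => E n `\` E n.+1.
have mF : forall n, measurable (F n) by move=> n; apply: measurableD.
have tF : trivIset setT F.
  move=> i j _ _ [x [[Ei nEi] [Ej nEj]]].
  case: (ltngtP i j) => // ij; exfalso.
    by apply: nEi; exact: (@mono_sub E dec _ _ ij x Ej).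
  by apply: nEj; exact: (@mono_sub E dec _ _ ij x Ei).
have eU : \bigcup_n F n = E 0%N.
  apply/seteqP; split => x /=.
    by case=> n _ [h _]; apply: (@mono_sub E dec _ _ (leq0n n)).
  move=> E0; have [j nj] := emp x; elim: j nj => [|j IH] nj; first by [].
  have [Ej|nEj] := pselect (E j x); first by exists j.
  exact: IH.
have H := ca F mF tF; rewrite eU cvg_epsP in H.
have [M HM] := H e e0; exists M => j Mj; have := HM j Mj.
have -> : \sum_(i < j) rho (F i) = rho (E 0%N) - rho (E j).
  elim: j {Mj} => [|j IH]; first by rewrite big_ord0 subrr.
  rewrite big_ord_recr /= IH (famD _ hr) //; first by lra.
have := famge0 _ hr _ (mE j); rewrite ltr_norml => h0 /andP[h1 h2]; lra.
Qed.

Lemma cont0_ca (rho : set X -> R) : famS rho -> cont0 rho -> countably_additive rho.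
Proof.
move=> hr c0 F mF tF; apply/cvg_epsP => e e0.
pose U n := \bigcup_(i in [set i | (i < n)%N]) F i.
pose Tl n := \bigcup_(i in [set i | (n <= i)%N]) F i.
have mU n : measurable (U n) by apply: bigcup_measurable => k _; exact: mF.
have mT n : measurable (Tl n) by apply: bigcup_measurable => k _; exact: mF.
have sumU n : \sum_(i < n) rho (F i) = rho (U n).
  elim: n => [|n IH].
    rewrite big_ord0; have -> : U 0%N = set0.
      by apply/seteqP; split => x // [i].
    by rewrite (fam0 _ hr).
  rewrite big_ord_recr /= IH -hr.2 //.
    congr rho; apply/seteqP; split => x.
      by case=> [[i /= ilt Fi]|Fn]; [exists i => //=; exact: ltnW|exists n => /=].
    case=> i /= ilt Fi; rewrite ltnS leq_eqVlt in ilt.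
    case/orP: ilt => [/eqP <-|ilt]; [right|left; exists i] => //.
  apply/seteqP; split => x // [[i /= ilt Fi] Fn].
  have := tF i n I I; rewrite /= => h.
  by move: ilt; rewrite h ?ltnn //; exists x.
have spl n : rho (\bigcup_k F k) = rho (U n) + rho (Tl n).
  rewrite -hr.2 //.
    congr rho; apply/seteqP; split => x.
      case=> i _ Fi; case: (ltnP i n) => h; [left|right]; exists i => //.
    by case=> -[i _ Fi]; exists i.
  apply/seteqP; split => x // [[i /= ilt Fi] [j /= jge Fj]].
  have := tF i j I I; rewrite /= => h.
  by move: ilt; rewrite h; [rewrite ltnNge jge|exists x].
have dec : forall j, Tl j.+1 `<=` Tl j.
  by move=> j x [i /= ji Fi]; exists i => //=; exact: ltnW.
have emp : forall x, exists j, ~ Tl j x.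
  move=> x; have [[i Fi]|nF] := pselect (exists i, F i x).
    exists i.+1 => -[k /= ik Fk].
    have := tF i k I I; rewrite /= => h.
    by move: ik; rewrite h ?ltnn //; exists x.
  by exists 0%N => -[k _ Fk]; apply: nF; exists k.
have [M HM] := c0 Tl mT dec emp e e0.
exists M => n Mn; rewrite sumU (spl n).
have := HM n Mn; have := famge0 _ hr _ (mT n); rewrite ltr_norml => h1 h2.
apply/andP; split; lra.
Qed.
End CA.

Section Integral.
Context {d : measure_display} {X : measurableType d} {R : realType}.

Lemma unit_fib : forall t : unit, measurable [set x : X | tt = t].
Proof. by case; have -> : [set x : X | tt = tt] = setT by apply/seteqP; split. Qed.

Lemma int_add (rho : set X -> R) (f g : X -> R) : famS rho ->
  measurable_fun setT f -> measurable_fun setT g ->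
  (forall x, 0 <= f x) -> (forall x, 0 <= g x) -> (forall x, f x + g x <= 1) ->
  fa_integral rho (fun x => f x + g x) = fa_integral rho f + fa_integral rho g.
Proof.
move=> hr mf mg f0 g0 fg1.
have f01 x : 0 <= f x <= 1 by rewrite f0 /=; have := fg1 x; have := g0 x; lra.
have g01 x : 0 <= g x <= 1 by rewrite g0 /=; have := fg1 x; have := f0 x; lra.
have fg01 x : 0 <= f x + g x <= 1 by rewrite addr_ge0 // fg1.
apply: (@eq_of_smallN _ _ _ (2 * rho setT)) => N N0.
pose lab x := (lvl N f x, lvl N g x).
have mF : forall t, measurable [set x | lab x = t].
  move=> t; have -> : [set x | lab x = t] =
    [set x | lvl N f x = t.1] `&` [set x | lvl N g x = t.2].
    apply/seteqP; split => x /=; first by rewrite /lab => <-.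
    by case: t => a b /= [<- <-].
  by apply: measurableI; apply: lvl_meas => //.
have N0' : 0 < (N%:R : R) by rewrite ltr0n.
have hN : 0 <= (N%:R : R)^-1 by rewrite invr_ge0 ltW.
pose c1 (t : 'I_N.+1 * 'I_N.+1) := (t.1 : nat)%:R / (N%:R : R).
pose c2 (t : 'I_N.+1 * 'I_N.+1) := (t.2 : nat)%:R / (N%:R : R).
have c10 t : 0 <= c1 t by rewrite /c1 divr_ge0.
have c20 t : 0 <= c2 t by rewrite /c2 divr_ge0.
have S1 := @SW _ _ _ rho hr _ lab c1 f (N%:R^-1) 1 mF c10 hN ler01 f01 (fun x => lvl_bounds N f x N0 (f01 x)).
have S2 := @SW _ _ _ rho hr _ lab c2 g (N%:R^-1) 1 mF c20 hN ler01 g01 (fun x => lvl_bounds N g x N0 (g01 x)).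
have S12 := @SW _ _ _ rho hr _ lab (fun t => c1 t + c2 t) (fun x => f x + g x)
   (N%:R^-1 + N%:R^-1) 1 mF (fun t => addr_ge0 (c10 t) (c20 t)) (addr_ge0 hN hN) ler01
   fg01.
have {S12} S12 := S12 (fun x => ltac:(have := lvl_bounds N f x N0 (f01 x); have := lvl_bounds N g x N0 (g01 x);
   rewrite /c1 /c2 /=; move=> /andP[h1 h2] /andP[h3 h4]; apply/andP; split; lra)).
have eS : \sum_(t : 'I_N.+1 * 'I_N.+1) (c1 t + c2 t) * rho [set x | lab x = t] =
  \sum_(t : 'I_N.+1 * 'I_N.+1) c1 t * rho [set x | lab x = t] +
  \sum_(t : 'I_N.+1 * 'I_N.+1) c2 t * rho [set x | lab x = t].
  by rewrite -big_split /=; apply: eq_bigr => t _; rewrite mulrDl.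
move: S1 S2 S12; rewrite eS mulrDl.
set A := \sum_(t : 'I_N.+1 * 'I_N.+1) c1 t * _.
set B := \sum_(t : 'I_N.+1 * 'I_N.+1) c2 t * _.
set w := N%:R^-1 * rho setT.
have -> : 2 * rho setT / N%:R = w + w by rewrite /w; ring.
move=> /andP[h1 h2] /andP[h3 h4] /andP[h5 h6].
rewrite ler_norml; apply/andP; split; lra.
Qed.

Lemma famS_lin (K : nat) (w : 'I_K -> R) (rh : 'I_K -> set X -> R) :
  (forall k, famS (rh k)) -> (forall k, 0 <= w k) ->
  famS (fun E => \sum_(k < K) w k * rh k E).
Proof.
move=> hr w0; split.
  by move=> E mE; apply: sumr_ge0 => k _; apply: mulr_ge0 => //; apply: (hr k).1.
move=> E F mE mF EF; rewrite -big_split /=; apply: eq_bigr => k _.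
by rewrite (hr k).2 // mulrDr.
Qed.

Lemma int_lin (K : nat) (w : 'I_K -> R) (rh : 'I_K -> set X -> R) (f : X -> R) :
  (forall k, famS (rh k)) -> (forall k, 0 <= w k) ->
  measurable_fun setT f -> (forall x, 0 <= f x <= 1) ->
  fa_integral (fun E => \sum_(k < K) w k * rh k E) f =
  \sum_(k < K) w k * fa_integral (rh k) f.
Proof.
move=> hr w0 mf f01.
have hl := @famS_lin K w rh hr w0.
have M0 : 0 <= \sum_(k < K) w k * rh k setT.
  by apply: sumr_ge0 => k _; apply: mulr_ge0 => //; apply: (hr k).1.
apply: (@eq_of_smallN _ _ _ (\sum_(k < K) w k * rh k setT)) => N N0.
pose lab := lvl N f.
have mF := lvl_meas N f mf f01.
have N0' : 0 < (N%:R : R) by rewrite ltr0n.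
have hN : 0 <= (N%:R : R)^-1 by rewrite invr_ge0 ltW.
pose c (t : 'I_N.+1) := (t : nat)%:R / (N%:R : R).
have c0 t : 0 <= c t by rewrite /c divr_ge0.
have lb x := lvl_bounds N f x N0 (f01 x).
have Sl := @SW _ _ _ _ hl _ lab c f (N%:R^-1) 1 mF c0 hN ler01 f01 lb.
have Sk k := @SW _ _ _ _ (hr k) _ lab c f (N%:R^-1) 1 mF c0 hN ler01 f01 lb.
have eS : \sum_(t : 'I_N.+1) c t * (\sum_(k < K) w k * rh k [set x | lab x = t]) =
    \sum_(k < K) w k * \sum_(t : 'I_N.+1) c t * rh k [set x | lab x = t].
  under eq_bigr do rewrite mulr_sumr.
  rewrite exchange_big /=; apply: eq_bigr => k _; rewrite mulr_sumr.
  by apply: eq_bigr => t _; rewrite mulrCA.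
move: Sl; rewrite eS.
set S := \sum_(k < K) w k * _.
move=> /andP[h1 h2].
have h3 : S <= \sum_(k < K) w k * fa_integral (rh k) f.
  apply: ler_sum => k _; apply: ler_wpM2l => //; by case/andP: (Sk k).
have h4 : \sum_(k < K) w k * fa_integral (rh k) f <=
    S + N%:R^-1 * \sum_(k < K) w k * rh k setT.
  rewrite mulr_sumr -big_split /=; apply: ler_sum => k _.
  rewrite mulrCA -mulrDr; apply: ler_wpM2l => //; by case/andP: (Sk k).
move: h2 h3 h4; rewrite (mulrC _ N%:R^-1).
set I1 := fa_integral _ f.
set I2 := \sum_(k < K) w k * fa_integral (rh k) f.
set Q := N%:R^-1 * _.
move=> h2 h3 h4; have h1p : S <= I1 := h1.
rewrite ler_norml; apply/andP; split; lra.
Qed.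
End Integral.

Section Markov.
Context {d : measure_display} {X : measurableType d} {R : realType}.
Variable p : X -> set X -> R.
Hypothesis hp : transition_function p.

Lemma sum_unit (F : unit -> R) : \sum_(t : unit) F t = F tt.
Proof. by rewrite (bigD1 tt) //= big_pred0 ?addr0; last by case. Qed.

Lemma p01 x E : measurable E -> 0 <= p x E <= 1.
Proof. by case: hp => h _ _ _; apply: h. Qed.

Lemma p_meas E : measurable E -> measurable_fun setT (fun x => p x E).
Proof. by case: hp => _ _ h _; apply: h. Qed.

Lemma p_famS x : famS (p x).
Proof.
case: hp => h _ _ hc; apply: ca_famS => //.
by move=> E mE; case/andP: (h x E mE).
Qed.

Lemma p_cont0 x : cont0 (p x).
Proof. by apply: ca_cont0; [exact: p_famS|case: hp]. Qed.

Lemma fib_tt : [set x : X | tt = tt] = setT.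
Proof. by apply/seteqP; split. Qed.

Lemma A_prob rho : fa_prob rho -> fa_prob (markov_op p rho).
Proof.
move=> hP; have hr := famS_prob rho hP; split.
- move=> E mE; rewrite /markov_op.
  have := @int_ge _ _ _ rho hr unit (fun _ => tt) (fun _ => 0) (fun x => p x E) 1
    unit_fib ler01 (fun x => proj2 (andP (p01 x E mE))) (fun x => proj1 (andP (p01 x E mE))).
  by rewrite sum_unit mul0r.
- rewrite /markov_op.
  have -> : (fun x => p x setT) = (fun _ => 1).
    by apply: funext => x; case: hp => _ h _ _; apply: h.
  have := @SW _ _ _ rho hr unit (fun _ => tt) (fun _ => 1) (fun _ => 1) 0 1
    unit_fib (fun _ => ler01) (lexx 0) ler01 (fun _ => ltac:(by rewrite ler01 lexx))
    (fun _ => ltac:(by rewrite addr0 lexx)).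
  rewrite sum_unit fib_tt mul0r addr0 mul1r; case: hP => _ -> _ h.
  by apply/le_anti; rewrite andbC.
- move=> E F mE mF EF; rewrite /markov_op.
  have -> : (fun x => p x (E `|` F)) = (fun x => p x E + p x F).
    by apply: funext => x; rewrite (p_famS x).2.
  apply: int_add => //.
  + exact: p_meas.
  + exact: p_meas.
  + by move=> x; case/andP: (p01 x E mE).
  + by move=> x; case/andP: (p01 x F mF).
  + move=> x; rewrite -(p_famS x).2 //; case/andP: (p01 x _ (@measurableU _ _ E F mE mF)) => //.
Qed.

Lemma A_cont0 rho : fa_prob rho -> cont0 rho -> cont0 (markov_op p rho).
Proof.
move=> hP c0 E mE dec emp e e0.
have hr := famS_prob rho hP.
have e2 : 0 < e / 2 by rewrite divr_gt0.
pose G j := [set x | e / 2 <= p x (E j)].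
have mG j : measurable (G j).
  have := p_meas (E j) (mE j) measurableT _ (measurable_itv `[e / 2, +oo[).
  congr measurable; apply/seteqP; split => x /=; rewrite in_itv /= andbT //.
  by case.
have decG j : G j.+1 `<=` G j.
  move=> x /= h; apply: (le_trans h); apply: famle; [exact: p_famS|exact: mE|exact: mE|exact: dec].
have empG x : exists j, ~ G j x.
  have [M HM] := p_cont0 x E mE dec emp (e / 2) e2.
  by exists M => /= h; have := HM M (leqnn _); rewrite ltNge h.
have [M HM] := c0 G mG decG empG (e / 2) e2.
exists M => j Mj.
pose lab x := e / 2 <= p x (E j).
have mF : forall b, measurable [set x | lab x = b].
  case.
    by have -> : [set x | lab x = true] = G j by apply/seteqP; split.
  have -> : [set x | lab x = false] = ~` G j.
    apply/seteqP; split => x /=; rewrite /lab /G /=.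
      by move=> -> .
    by case: (e / 2 <= p x (E j)) => // h; exfalso; apply: h.
  exact: measurableC.
pose c (b : bool) := if b then 1 else e / 2.
have := @int_le _ _ _ rho hr bool lab c (fun x => p x (E j)) mF.
rewrite /c => /(_ (fun b => ltac:(case: b => //; exact: ltW))).
move=> /(_ (fun x => proj1 (andP (p01 x _ (mE j))))).
have fc : forall x, p x (E j) <= (if lab x then 1 else e / 2).
  move=> x; rewrite /lab; case: ifP => h; first by case/andP: (p01 x _ (mE j)).
  by apply: ltW; rewrite ltNge h.
move=> /(_ fc); rewrite big_bool /= mul1r.
have -> : [set x | lab x = true] = G j by apply/seteqP; split.
move=> h.
have h1 := HM j Mj.
have h2 : rho [set x | lab x = false] <= 1.
  case: hP => _ <- _; apply: famle => //.
have h3 : 0 <= rho [set x | lab x = false] by apply: famge0 => //; exact: mF.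
rewrite /markov_op; apply: (le_lt_trans h).
have : e / 2 * rho [set x | lab x = false] <= e / 2.
  by rewrite -[leRHS]mulr1; apply: ler_wpM2l => //; exact: ltW.
lra.
Qed.

End Markov.

Section Ulim.
Context {R : realType}.
Variable U : set_system nat.
Hypothesis hU : UltraFilter U.

Let hPF : ProperFilter U := @ultra_proper _ _ hU.
Let hF : Filter U := @filter_filter _ _ hPF.

Definition ulim (a : nat -> R) (L : R) :=
  forall e, 0 < e -> U [set n | `|a n - L| < e].

Lemma U_ex A : U A -> exists n, A n.
Proof. by move=> UA; apply: (@filter_ex _ _ hPF). Qed.

Lemma UI A B : U A -> U B -> U (A `&` B).
Proof. exact: (@filterI _ _ hF). Qed.

Lemma US A B : A `<=` B -> U A -> U B.
Proof. exact: (@filterS _ _ hF). Qed.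

Lemma UT : U setT.
Proof. exact: (@filterT _ _ hF). Qed.

Arguments U_ex {A}.
Arguments UI {A B}.
Arguments US {A B}.

Lemma ulim_uniq a L1 L2 : ulim a L1 -> ulim a L2 -> L1 = L2.
Proof.
move=> h1 h2; apply/eqP; rewrite -subr_eq0; apply/eqP/eq_of_small => e e0.
have e2 : 0 < e / 2 by rewrite divr_gt0.
have [n [h3 h4]] := U_ex (UI (h1 _ e2) (h2 _ e2)).
move: h3 h4; rewrite /= !ltr_norml => /andP[h3 h4] /andP[h5 h6].
apply/andP; split; lra.
Qed.

Lemma ulimD a b La Lb : ulim a La -> ulim b Lb ->
  ulim (fun n => a n + b n) (La + Lb).
Proof.
move=> h1 h2 e e0; have e2 : 0 < e / 2 by rewrite divr_gt0.
apply: US (UI (h1 _ e2) (h2 _ e2)) => n /= [].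
rewrite !ltr_norml => /andP[h3 h4] /andP[h5 h6]; apply/andP; split; lra.
Qed.

Arguments ulimD {a b La Lb}.

Lemma ulimZ c a L : ulim a L -> ulim (fun n => c * a n) (c * L).
Proof.
move=> h e e0; have c1 : 0 < `|c| + 1 by rewrite ltr_wpDl.
have e1 : 0 < e / (`|c| + 1) by rewrite divr_gt0.
apply: US (h _ e1) => n /= h1; rewrite -mulrBr normrM.
apply: (le_lt_trans (y := `|c| * (e / (`|c| + 1)))).
  by apply: ler_wpM2l => //; apply: ltW.
rewrite mulrCA -[ltRHS]mulr1 ltr_pM2l // ltr_pdivrMr // mul1r.
by rewrite ltrDl.
Qed.

Lemma ulim_cst c : ulim (fun _ => c) c.
Proof. by move=> e e0; apply: US UT => n _ /=; rewrite subrr normr0. Qed.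

Lemma ulim_sum (T : finType) (a : T -> nat -> R) (L : T -> R) :
  (forall t, ulim (a t) (L t)) ->
  ulim (fun n => \sum_(t : T) a t n) (\sum_(t : T) L t).
Proof.
move=> h.
suff : forall s : seq T, ulim (fun n => \sum_(t <- s) a t n) (\sum_(t <- s) L t) by apply.
elim => [|t s IH].
  move=> e e0; apply: US UT => n _ /=; by rewrite !big_nil subrr normr0.
move=> e e0; apply: (US _ (ulimD (h t) IH e e0)) => n /=; by rewrite !big_cons.
Qed.

Lemma ulim_ge0 a L : (forall n, 0 <= a n) -> ulim a L -> 0 <= L.
Proof.
move=> a0 h; rewrite leNgt; apply/negP => L0.
have [n /= hn] := U_ex (h (- L) ltac:(by rewrite oppr_gt0)).
have := a0 n; move: hn; rewrite ltr_norml => /andP[h1 h2] h3; lra.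
Qed.

Lemma ulim_ex a : (forall n, 0 <= a n <= 1) -> exists L, ulim a L.
Proof.
move=> a01.
pose S := [set r : R | U [set n | r <= a n]].
have S0 : S 0 by apply: (US _ UT) => n _; case/andP: (a01 n).
have Sub : ubound S 1.
  move=> r Sr; have [n rn] := U_ex Sr; apply: le_trans rn _; by case/andP: (a01 n).
have hs : has_sup S by split; [exists 0|exists 1].
exists (sup S) => e e0.
have e2 : 0 < e / 2 by rewrite divr_gt0.
have [r Sr hr] := sup_adherent e0 hs.
have nS : ~ S (sup S + e / 2).
  move=> h; have := sup_upper_bound hs h; lra.
case: (in_ultra_setVsetC [set n | sup S + e / 2 <= a n] hU) => // hC.
apply: (US _ (UI Sr hC)) => n /= [h1 h2].
have h3 : a n < sup S + e / 2 by rewrite ltNge; apply/negP.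
rewrite ltr_norml; apply/andP; split; lra.
Qed.

End Ulim.

Arguments ulim_uniq {R U} hU {a L1 L2}.
Arguments ulimD {R U} hU {a b La Lb}.
Arguments ulimZ {R U} hU c {a L}.
Arguments ulim_sum {R U} hU {T a L}.
Arguments ulim_ge0 {R U} hU {a L}.
Arguments ulim_cst {R U} hU c.
Arguments US {U} hU {A B}.
Arguments UI {U} hU {A B}.
Arguments U_ex {U} hU {A}.

Lemma ultra_on (Ns : set nat) : (forall M, exists n, (M <= n)%N /\ Ns n) ->
  exists U : set_system nat, UltraFilter U /\ U Ns /\ (forall M, U [set n | (M <= n)%N]).
Proof.
move=> inf.
pose F0 := [set A : set nat | exists M, forall n, (M <= n)%N -> Ns n -> A n].
have FF : Filter F0.
  split.
  - by exists 0%N.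
  - move=> A B [M1 h1] [M2 h2]; exists (maxn M1 M2) => n h hn; split.
      by apply: h1 => //; apply: leq_trans h; exact: leq_maxl.
    by apply: h2 => //; apply: leq_trans h; exact: leq_maxr.
  - by move=> A B AB [M h]; exists M => n h1 h2; apply: AB; apply: h.
have PF : ProperFilter F0.
  apply: Build_ProperFilter => //.
  by move=> [M h]; have [n [h1 h2]] := inf M; exact: (h n h1 h2).
have [G [UG sub]] := ultraFilterLemma PF.
exists G; split => //; split.
  by apply: sub; exists 0%N.
by move=> M; apply: sub; exists M.
Qed.

Section Conv.
Context {d : measure_display} {X : measurableType d} {R : realType}.
Variable p : X -> set X -> R.
Hypothesis hp : transition_function p.
Variables (lam : nat -> set X -> R) (mu : set X -> R).
Hypothesis hlam : forall n, fa_prob (lam n).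
Hypothesis hAlam : forall E, measurable E -> forall e, 0 < e ->
  exists M, forall n, (M <= n)%N -> `|markov_op p (lam n) E - lam n E| < e.
Hypothesis huniq : forall nu, fa_prob nu -> meq (markov_op p nu) nu -> meq nu mu.

Lemma prob01 (rho : set X -> R) E : fa_prob rho -> measurable E -> 0 <= rho E <= 1.
Proof.
move=> hP mE; have hr := famS_prob rho hP; rewrite famge0 //=.
case: hP => _ <- _; apply: famle => //.
Qed.

Lemma conv B : measurable B -> forall e, 0 < e ->
  exists M, forall n, (M <= n)%N -> `|lam n B - mu B| < e.
Proof.
move=> mB e e0; apply: contrapT => H.
have Ninf : forall M, exists n, (M <= n)%N /\ e <= `|lam n B - mu B|.
  move=> M; apply: contrapT => h; apply: H; exists M => n Mn.
  rewrite ltNge; apply/negP => h'; apply: h; by exists n.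
have [U [hU [UN Ucof]]] := @ultra_on [set n | e <= `|lam n B - mu B|] Ninf.
have nuex : forall E, exists L, measurable E -> ulim U (fun n => lam n E) L.
  move=> E; have [mE|nmE] := pselect (measurable E); last by exists 0.
  have [L hL] := @ulim_ex R U hU _ (fun n => prob01 (lam n) E (hlam n) mE).
  by exists L.
pose nu E := proj1_sig (cid (nuex E)).
have nuP E : measurable E -> ulim U (fun n => lam n E) (nu E).
  by move=> mE; exact: (proj2_sig (cid (nuex E)) mE).
have hnu : fa_prob nu.
  split.
  - move=> E mE; apply: (ulim_ge0 hU _ (nuP E mE)) => n.
    by case/andP: (prob01 (lam n) E (hlam n) mE).
  - apply: (ulim_uniq hU (nuP setT measurableT)).
    have -> : (fun n => lam n setT) = (fun _ => 1).
      by apply: funext => n; case: (hlam n).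
    exact: ulim_cst.
  - move=> E F mE mF EF; apply: (ulim_uniq hU (nuP _ (@measurableU _ _ E F mE mF))).
    have -> : (fun n => lam n (E `|` F)) = (fun n => lam n E + lam n F).
      by apply: funext => n; case: (hlam n) => _ _ ->.
    exact: ulimD (nuP E mE) (nuP F mF).
have hnur := famS_prob nu hnu.
have inv : meq (markov_op p nu) nu.
  move=> E mE.
  apply: (@eq_of_smallN _ _ _ 2) => N N0.
  have f01 x : 0 <= p x E <= 1 := p01 p hp x E mE.
  have mf := p_meas p hp E mE.
  pose lab := lvl N (fun x => p x E).
  have mF := lvl_meas N (fun x => p x E) mf f01.
  have N0' : 0 < (N%:R : R) by rewrite ltr0n.
  have hN : 0 <= (N%:R : R)^-1 by rewrite invr_ge0 ltW.
  pose c (t : 'I_N.+1) := (t : nat)%:R / (N%:R : R).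
  have c0 t : 0 <= c t by rewrite /c divr_ge0.
  have lb x := lvl_bounds N (fun x => p x E) x N0 (f01 x).
  have Snu := @SW _ _ _ _ hnur _ lab c (fun x => p x E) (N%:R^-1) 1 mF c0 hN ler01 f01 lb.
  have Sl n := @SW _ _ _ _ (famS_prob _ (hlam n)) _ lab c (fun x => p x E) (N%:R^-1) 1 mF c0 hN ler01 f01 lb.
  have uS : ulim U (fun n => \sum_(t : 'I_N.+1) c t * lam n [set x | lab x = t])
                  (\sum_(t : 'I_N.+1) c t * nu [set x | lab x = t]).
    by apply: ulim_sum => t; apply: ulimZ; apply: nuP.
  have nuT : nu setT = 1 by case: hnu.
  move: Snu; rewrite nuT mulr1 /markov_op => /andP[s1 s2].
  rewrite -/(markov_op p nu E).
  apply/ler_addgt0Pr => eps eps0.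
  have e3 : 0 < eps / 3 by rewrite divr_gt0.
  have [M HM] := hAlam E mE _ e3.
  have [n [[h1 h2] h3]] := U_ex hU (UI hU (UI hU (uS _ e3) (nuP E mE _ e3)) (Ucof M)).
  have := Sl n; have -> : lam n setT = 1 by case: (hlam n).
  rewrite mulr1 => /andP[s3 s4].
  have h4 := HM n h3.
  move: h1 h2 h4; rewrite /= !ltr_norml => /andP[h1 h1'] /andP[h2 h2'] /andP[h4 h4'].
  move: s1 s2 s3 s4 h1 h1' h4 h4' h2 h2'; rewrite /markov_op.
  set I1 := fa_integral nu _.
  set I2 := fa_integral (lam n) _.
  set S1 := \sum_(t < N.+1) c t * lam n _.
  set S2 := \sum_(t < N.+1) c t * nu _.
  have -> : 2 / N%:R = N%:R^-1 + N%:R^-1 :> R by rewrite mulr2n mulrDl mul1r.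
  move=> s1 s2 s3 s4 h1 h1' h4 h4' h2 h2'.
  rewrite ler_norml; apply/andP; split; lra.
have := huniq nu hnu inv B mB.
move=> eq; have [n [h1 h2]] := U_ex hU (UI hU UN (nuP B mB _ e0)).
move: h1 h2; rewrite /= eq => h1 h2; move: h1; rewrite leNgt h2.
by [].
Qed.
End Conv.

Section Hump.
Context {d : measure_display} {X : measurableType d} {R : realType}.
Variables (lam : nat -> set X -> R) (mu : set X -> R).
Hypothesis hlam : forall n, famS (lam n).
Hypothesis clam : forall n, cont0 (lam n).
Hypothesis hmu : famS mu.
Hypothesis hconv : forall B, measurable B -> forall e, 0 < e ->
  exists M, forall n, (M <= n)%N -> `|lam n B - mu B| < e.

Lemma hump : cont0 mu.
Proof.
move=> E mE dec emp eps eps0; apply: contrapT => H.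
have big : forall j, eps <= mu (E j).
  move=> j; apply: contrapT => hj; apply: H; exists j => k jk.
  apply: (@le_lt_trans _ _ (mu (E j))).
    by apply: famle => //; exact: (@mono_sub _ _ E dec _ _ jk).
  by rewrite ltNge; apply/negP.
pose e := eps / 10.
have e0 : 0 < e by rewrite divr_gt0.
have nselP : forall (k J : nat) (P : set X), exists n, [/\ (k <= n)%N,
    (measurable P -> `|lam n P - mu P| < e) & `|lam n (E J) - mu (E J)| < e].
  move=> k J P.
  have [M2 HM2] := hconv _ (mE J) _ e0.
  have [mP|nmP] := pselect (measurable P); last first.
    exists (maxn k M2); split => //; first exact: leq_maxl.
    by apply: HM2; exact: leq_maxr.
  have [M1 HM1] := hconv _ mP _ e0.
  exists (maxn k (maxn M1 M2)); split.
  - exact: leq_maxl.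
  - move=> _; apply: HM1; apply: leq_trans (leq_maxr _ _); exact: leq_maxl.
  - apply: HM2; apply: leq_trans (leq_maxr _ _); exact: leq_maxr.
have JselP : forall n J : nat, exists J', (J < J')%N /\ lam n (E J') < e.
  move=> n J; have [M HM] := clam n E mE dec emp e e0.
  exists (maxn M J.+1); split; first exact: leq_maxr.
  by apply: HM; exact: leq_maxl.
pose nsel k J P := proj1_sig (cid (nselP k J P)).
pose Jsel n J := proj1_sig (cid (JselP n J)).
pose step (k : nat) (s : nat * set X) : nat * set X :=
  (Jsel (nsel k s.1 s.2) s.1,
   s.2 `|` (if odd k then set0 else E s.1 `\` E (Jsel (nsel k s.1 s.2) s.1))).
pose S := fix S (k : nat) : nat * set X :=
  if k is k'.+1 then step k' (S k') else (0%N, set0).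
pose J k := (S k).1.
pose P k := (S k).2.
pose n k := nsel k (J k) (P k).
pose Mk k := if odd k then set0 else E (J k) `\` E (J k.+1).
have JS k : J k.+1 = Jsel (n k) (J k) by [].
have PS k : P k.+1 = P k `|` Mk k by [].
have hn k : [/\ (k <= n k)%N,
    (measurable (P k) -> `|lam (n k) (P k) - mu (P k)| < e) &
    `|lam (n k) (E (J k)) - mu (E (J k))| < e].
  exact: (proj2_sig (cid (nselP k (J k) (P k)))).
have hJ k : (J k < J k.+1)%N /\ lam (n k) (E (J k.+1)) < e.
  rewrite JS; exact: (proj2_sig (cid (JselP (n k) (J k)))).
have Jmono : forall i j, (i <= j)%N -> (J i <= J j)%N.
  move=> i j /subnKC <-; elim: (j - i)%N => [|k IH]; first by rewrite addn0.
  by rewrite addnS; apply: leq_trans IH (ltnW (hJ _).1).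
have Esub : forall i j, (i <= j)%N -> E (J j) `<=` E (J i).
  by move=> i j h; exact: (@mono_sub _ _ E dec _ _ (Jmono i j h)).
have mM k : measurable (Mk k).
  by rewrite /Mk; case: odd; [exact: measurable0|apply: measurableD].
have mP k : measurable (P k).
  elim: k => [|k IH]; first exact: measurable0.
  by rewrite PS; exact: measurableU.
have ME k : Mk k `<=` E (J k).
  by rewrite /Mk; case: odd => // x [].
have PE k : P k `&` E (J k) = set0.
  elim: k => [|k IH]; first by rewrite /P /= set0I.
  rewrite PS setIUl; apply/seteqP; split => x //=; case => [[Px Ex]|[Mx Ex]].
    have : (P k `&` E (J k)) x by split => //; apply: (Esub k k.+1 (leqnSn k)).
    by rewrite IH.
  by move: Mx; rewrite /Mk; case: odd => //= -[_ nE]; apply: nE.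
have Pdef k : P k = [set x | exists2 l, (l < k)%N & Mk l x].
  elim: k => [|k IH]; first by apply/seteqP; split => x //= [l].
  rewrite PS IH; apply/seteqP; split => x /=.
    case => [[l lk Ml]|Mx]; [exists l => //; exact: ltnW|by exists k].
  case => l; rewrite ltnS leq_eqVlt => /orP [/eqP -> Mx|lk Ml]; [by right|by left; exists l].
pose D := \bigcup_k Mk k.
have mD : measurable D by apply: bigcup_measurable => k _; exact: mM.
have decomp k : D = P k `|` Mk k `|` (D `&` E (J k.+1)).
  apply/seteqP; split => x.
    case => l _ Ml; case: (ltngtP l k) => [lk|kl|lk].
    - by left; left; rewrite Pdef; exists l.
    - right; split; first by exists l.
      by apply: (Esub k.+1 l kl); apply: ME.
    - by left; right; rewrite -lk.
  case => [[Px|Mx]|[Dx _]] //.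
    by move: Px; rewrite Pdef => -[l _ Ml]; exists l.
  by exists k.
have dPM k : P k `&` Mk k = set0.
  apply/seteqP; split => x //= [Px Mx].
  have : (P k `&` E (J k)) x by split => //; apply: ME.
  by rewrite PE.
have dPME k : (P k `|` Mk k) `&` (D `&` E (J k.+1)) = set0.
  apply/seteqP; split => x //= [[Px|Mx] [_ Ex]].
    have : (P k `&` E (J k)) x by split => //; apply: (Esub k k.+1 (leqnSn k)).
    by rewrite PE.
  by move: Mx; rewrite /Mk; case: odd => //= -[_ nE]; apply: nE.
have lamD m k : lam m D = lam m (P k) + lam m (Mk k) + lam m (D `&` E (J k.+1)).
  rewrite {1}(decomp k) (hlam m).2 //.
  - by rewrite (hlam m).2.
  - exact: measurableU.
  - by apply: measurableI.
have ee : e * 10 = eps by rewrite /e divfK.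
have [M HM] := hconv _ mD _ e0.
pose k := (M.*2).+1.
have oddk : odd k by rewrite /k /= odd_double.
have kM : (M <= k)%N by rewrite /k -addnn; apply: leq_trans (leq_addr M M) (leqnSn _).
have Mk0 : Mk k = set0 by rewrite /Mk oddk.
have Mk1 : Mk k.+1 = E (J k.+1) `\` E (J k.+2) by rewrite /Mk -[odd k.+1]/(~~ odd k) oddk.
have P1 : P k.+1 = P k by rewrite PS Mk0 setU0.
have [nk1 hPk hEk] := hn k.
have [nk2 hPk2 hEk2] := hn k.+1.
have hPk' := hPk (mP k).
have hPk2' := hPk2 (mP k.+1).
rewrite P1 in hPk2'.
have hJk := (hJ k).2.
have hJk2 := (hJ k.+1).2.
have A1 := lamD (n k) k.
rewrite Mk0 (fam0 _ (hlam _)) in A1.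
have A2 : lam (n k) (D `&` E (J k.+1)) <= lam (n k) (E (J k.+1)).
  by apply: famle => //; (try exact: measurableI); (try exact: subIsetr); move=> x [].

have B1 := lamD (n k.+1) k.+1.
rewrite Mk1 P1 famD // in B1; last exact: (Esub k.+1 k.+2 (leqnSn _)).
have B2 : 0 <= lam (n k.+1) (D `&` E (J k.+2)).
  by apply: famge0 => //; apply: measurableI.
have B3 := big (J k.+1).
have C1 := HM (n k) (leq_trans kM nk1).
have C2 := HM (n k.+1) (leq_trans (leq_trans kM (leqnSn _)) nk2).
have B4 : 0 <= lam (n k.+1) (E (J k.+2)) by apply: famge0.
move: hPk' hPk2' hEk2 C1 C2; rewrite !ltr_norml.
move=> /andP[a1 a2] /andP[a3 a4] /andP[a5 a6] /andP[a7 a8] /andP[a9 a10].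
lra.
Qed.
End Hump.

Section Final.
Context {d : measure_display} {X : measurableType d} {R : realType}.

Lemma cont0_add (a b : set X -> R) : cont0 a -> cont0 b ->
  cont0 (fun E => a E + b E).
Proof.
move=> ca cb E mE dec emp e e0; have e2 : 0 < e / 2 by rewrite divr_gt0.
have [M1 H1] := ca E mE dec emp _ e2; have [M2 H2] := cb E mE dec emp _ e2.
exists (maxn M1 M2) => j h.
have := H1 j (leq_trans (leq_maxl _ _) h); have := H2 j (leq_trans (leq_maxr _ _) h).
lra.
Qed.

Lemma cont0_scale (c : R) (a : set X -> R) : 0 <= c -> cont0 a ->
  cont0 (fun E => c * a E).
Proof.
move=> c0 ca E mE dec emp e e0.
have c1 : 0 < c + 1 by rewrite ltr_pwDr.
have [M H] := ca E mE dec emp _ (divr_gt0 e0 c1).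
exists M => j h; have := H j h => h1.
have [a0|a0] := leP 0 (a (E j)).
  apply: (@le_lt_trans _ _ ((c + 1) * a (E j))).
    by apply: ler_wpM2r => //; rewrite lerDl.
  by rewrite mulrC -ltr_pdivlMr.
by apply: (@le_lt_trans _ _ 0) => //; rewrite mulr_ge0_le0 // ltW.
Qed.

Lemma cont0_cst0 : cont0 (fun _ : set X => (0 : R)).
Proof. by move=> E _ _ _ e e0; exists 0%N. Qed.

Lemma cont0_sum (w : R) (q : nat -> set X -> R) K : 0 <= w ->
  (forall k, cont0 (q k)) -> cont0 (fun E => \sum_(k < K) w * q k E).
Proof.
move=> w0 cq; elim: K => [|K IH].
  have -> : (fun E => \sum_(k < 0) w * q k E) = (fun _ => 0).
    by apply: funext => E; rewrite big_ord0.
  exact: cont0_cst0.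
have -> : (fun E => \sum_(k < K.+1) w * q k E) =
  (fun E => \sum_(k < K) w * q k E + w * q K E).
  by apply: funext => E; rewrite big_ord_recr.
apply: cont0_add => //; exact: cont0_scale.
Qed.

Lemma telesc (a : nat -> R) n : \sum_(k < n) (a k.+1 - a k) = a n - a 0%N.
Proof.
elim: n => [|n IH]; first by rewrite big_ord0 subrr.
by rewrite big_ord_recr /= IH; lra.
Qed.

End Final.

Theorem theorem4p7 (d : measure_display) (X : measurableType d) (R : realType)
  (p : X -> set X -> R) (m : nat) (mu : nat -> set X -> R) :
  infinite_set [set: X] ->
  (forall x : X, measurable [set x]) ->
  transition_function p ->
  (0 < m)%N ->
  (forall i, (i < m)%N -> fa_prob (mu i)) ->
  (forall i j, (i < m)%N -> (j < m)%N -> i <> j -> ~ meq (mu i) (mu j)) ->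
  (forall i, (i < m)%N -> meq (markov_op p (mu i)) (mu (i.+1 %% m)%N)) ->
  (forall nu : set X -> R, fa_prob nu ->
     (meq (markov_op p nu) nu <-> meq nu (mean_measure m mu))) ->
  (forall i, (i < m)%N -> countably_additive (mu i)) /\
  countably_additive (mean_measure m mu).
Proof.
move=> hinf _ hp m0 hmu _ _ huniq.
have [x0 _] : exists x : X, True.
  apply: contrapT => h; apply: hinf.
  have -> : [set: X] = set0 by apply/seteqP; split => x // _; apply: h; exists x.
  exact: finite_set0.
pose q k := iter k (markov_op p) (p x0).
have hq : forall k, fa_prob (q k) /\ cont0 (q k).
  elim => [|k [IH1 IH2]].
    split; last exact: p_cont0.
    have [h1 h2] := p_famS p hp x0; split => //.
    by case: hp => _ h _ _; apply: h.
  by split; [exact: A_prob|exact: A_cont0].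
pose w (n : nat) : R := (n.+1%:R)^-1.
have w0 n : 0 <= w n by rewrite /w invr_ge0.
pose lam n E := \sum_(k < n.+1) w n * q k E.
have hlamS n : famS (lam n).
  exact: (@famS_lin _ _ _ n.+1 (fun _ => w n) (fun k => q k) (fun k => famS_prob _ (hq k).1) (fun _ => w0 n)).
have hlam n : fa_prob (lam n).
  have [h1 h2] := hlamS n; split => //.
  have qX k : q k setT = 1 by case: (hq k).1.
  rewrite /lam; under eq_bigr do rewrite qX mulr1.
  by rewrite sumr_const card_ord /w -[_ *+ _]mulr_natr mulVf // pnatr_eq0.
have clam n : cont0 (lam n) := @cont0_sum _ _ _ (w n) q n.+1 (w0 n) (fun k => (hq k).2).
have hAlam : forall E, measurable E -> forall e, 0 < e ->
    exists M, forall n, (M <= n)%N -> `|markov_op p (lam n) E - lam n E| < e.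
  move=> E mE e e0.
  have eqA n : markov_op p (lam n) E = \sum_(k < n.+1) w n * q k.+1 E.
    rewrite /markov_op /lam.
    apply: etrans (@int_lin _ _ _ n.+1 (fun _ => w n) (fun k => q k) (fun x => p x E)
      (fun k => famS_prob _ (hq k).1) (fun _ => w0 n) (p_meas p hp E mE)
      (fun x => p01 p hp x E mE)) _.
    by apply: eq_bigr.
  exists (Num.truncn e^-1) => n h.
  rewrite eqA /lam -sumrB.
  under eq_bigr do rewrite -mulrBr.
  rewrite -mulr_sumr (telesc (fun k => q k E)) normrM ger0_norm //.
  have h1 := prob01 _ _ (hq n.+1).1 mE.
  have h2 := prob01 _ _ (hq 0%N).1 mE.
  have h3 : `|q n.+1 E - q 0%N E| <= 1.
    rewrite ler_norml; case/andP: h1 => a b; case/andP: h2 => c d'; apply/andP; split; lra.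
  apply: (@le_lt_trans _ _ (w n)).
    by rewrite -[leRHS]mulr1; apply: ler_wpM2l.
  rewrite /w invf_plt ?posrE ?ltr0n //.
  apply: lt_le_trans (Num.Theory.truncnS_gt _) _.
  by rewrite ler_nat ltnS.
pose mean := mean_measure m mu.
have huq : forall nu, fa_prob nu -> meq (markov_op p nu) nu -> meq nu mean.
  by move=> nu h1 h2; exact: (huniq nu h1).1 h2.
have hconv := conv p hp lam mean hlam hAlam huq.
have mS : famS mean.
  split.
  - move=> E mE; rewrite /mean /mean_measure; apply: mulr_ge0; first by rewrite invr_ge0.
    by apply: sumr_ge0 => i _; case: (hmu i (ltn_ord i)) => h _ _; exact: h.
  - move=> E F mE mF EF; rewrite /mean /mean_measure -mulrDr -big_split /=.
    congr (_ * _); apply: eq_bigr => i _; case: (hmu i (ltn_ord i)) => _ _ h; exact: h.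
have cmean : cont0 mean := hump lam mean (fun n => famS_prob _ (hlam n)) clam mS hconv.
split; last exact: (cont0_ca _ mS cmean).
move=> i im.
have hi := famS_prob _ (hmu i im).
apply: (cont0_ca _ hi).
move=> E mE dec emp e e0.
have mpos : 0 < (m%:R : R) by rewrite ltr0n.
have [M HM] := cmean E mE dec emp (e / m%:R) (divr_gt0 e0 mpos).
exists M => j h; have := HM j h; rewrite /mean /mean_measure.
have hle : mu i (E j) <= \sum_(k < m) mu k (E j).
  rewrite (bigD1 (Ordinal im)) //= lerDl; apply: sumr_ge0 => k _.
  by case: (hmu k (ltn_ord k)) => hh _ _; apply: hh.
rewrite mulrC ltr_pM2r ?invr_gt0 // => h2.
exact: le_lt_trans hle h2.
Qed.
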